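(* Regard spinors as vectors in the 4-dimensional Euclidean space $(\mathrm{Cl}^+(3),(\cdot,\cdot))$. Then: (i) $\{a_1a_1=1,\ a_1a_2\}$ is a set of simple roots of a root system of type $A_2$ contained in the $H_4$ root system $2I$; (ii) $\{a_1a_1=1,\ a_2a_3\}$ is a set of simple roots of a root system of type $H_2$ contained in $2I$; (iii) $\{a_1a_1,\ a_1a_2,\ a_1a_2a_3a_2a_3a_1a_2a_3,\ a_3a_2a_1a_3a_2a_1a_3a_2\}$ is a set of simple roots of a root system of type $D_4$ contained in $2I$. (Here products are geometric products, and a set of simple roots of the given type means its Cartan matrix $A_{ij}=2(\alpha_i,\alpha_j)/(\alpha_i,\alpha_i)$ is that of the given type and the root system generated from it by the reflections $s_R(X)=-R\tilde XR$ lies in $2I$.)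
   Context: $\mathrm{Cl}(3)$ is the real Clifford algebra of Euclidean $\mathbb{R}^3$ with orthonormal basis $e_1,e_2,e_3$ ($e_i^2=1$, $e_ie_j=-e_je_i$ for $i\neq j$). Its even subalgebra $\mathrm{Cl}^+(3)$ is spanned by $1,e_2e_3,e_3e_1,e_1e_2$ (spinors). Reversal $\tilde{\ }$ reverses the order of vector factors. The spinor inner product is $(R_1,R_2)=\tfrac12(R_1\tilde R_2+R_2\tilde R_1)$, making $\mathrm{Cl}^+(3)$ a 4D Euclidean space with orthonormal basis $1,e_2e_3,e_3e_1,e_1e_2$; for a unit spinor $R$ the reflection in the hyperplane orthogonal to $R$ is $s_R(X)=X-2(R,X)R=-R\tilde XR$. Root systems are finite sets of nonzero vectors spanning their span, containing only $\pm\alpha$ among multiples of each root $\alpha$, and closed under the reflections in their roots. Let $\tau=\frac{1+\sqrt5}{2}$. The $H_3$ simple roots are $a_1=e_2$, $a_2=\tfrac12(-\tau e_1-e_2-(\tau-1)e_3)$, $a_3=e_1$. The binary icosahedral group $2I$ is the set of all products of an even number of factors from $\{a_1,a_2,a_3\}$ (a group of order 120); viewed as 120 vectors in the 4D spinor space it is the $H_4$ root system. The Cartan matrices are $A_2$: $\begin{pmatrix}2&-1\\-1&2\end{pmatrix}$; $H_2$: $\begin{pmatrix}2&-\tau\\-\tau&2\end{pmatrix}$; $D_4$: the standard Cartan matrix of the $D_4$ Dynkin diagram (one central node joined by simple links to three others). *)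

(* Defs.v *)
(* The real Clifford algebra Cl(3), built concretely on the
   basis of blades e_A (A a subset of {1,2,3}, listed in increasing order). *)
From HB Require Import structures.
From mathcomp Require Import all_boot all_order all_algebra.
Set Implicit Arguments. Unset Strict Implicit. Unset Printing Implicit Defensive.
Import Order.TTheory GRing.Theory Num.Theory.
Local Open Scope ring_scope.

Section Cl3.
Variable R : rcfType.

(* multivectors: coefficient of each blade e_A, A : {set 'I_3}
   (index 0,1,2 stand for e_1,e_2,e_3) *)
Definition mv := {ffun {set 'I_3} -> R}.

Definition symd (A B : {set 'I_3}) : {set 'I_3} := (A :\: B) :|: (B :\: A).

(* e_A e_B = bsign A B * e_(A symd B): one sign per inversion (i in A, j in B, j < i),
   using e_i^2 = 1 and e_i e_j = - e_j e_i *)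
Definition bsign (A B : {set 'I_3}) : R :=
  (-1) ^+ #|[set p in setX A B | (p.2 < p.1)%N]|.

Definition gp (x y : mv) : mv :=
  [ffun C => \sum_(A : {set 'I_3}) bsign A (symd A C) * x A * y (symd A C)].

Definition mv1 : mv := [ffun A : {set 'I_3} => (A == set0)%:R].

Definition prodl (s : seq mv) : mv := foldr gp mv1 s.

Definition rev (x : mv) : mv := [ffun A : {set 'I_3} => (-1) ^+ 'C(#|A|, 2) * x A].

Definition vec (x y z : R) : mv :=
  [ffun A : {set 'I_3} => if A == [set inord 0] then x
             else if A == [set inord 1] then y
             else if A == [set inord 2] then z else 0].

Definition sip (X Y : mv) : R := (gp X (rev Y) set0 + gp Y (rev X) set0) / 2.

Definition srefl (Rr X : mv) : mv := - gp (gp Rr (rev X)) Rr.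

Definition tau : R := (1 + Num.sqrt 5) / 2.

Definition a1 : mv := vec 0 1 0.
Definition a2 : mv := vec (- tau / 2) (- 1 / 2) (- (tau - 1) / 2).
Definition a3 : mv := vec 1 0 0.
Definition asimple (i : 'I_3) : mv :=
  if i == inord 0 then a1 else if i == inord 1 then a2 else a3.

Inductive in2I : mv -> Prop :=
  | in2I_one : in2I mv1
  | in2I_step (i j : 'I_3) (X : mv) :
      in2I X -> in2I (gp (asimple i) (gp (asimple j) X)).

Inductive gen_roots (n : nat) (alpha : 'I_n -> mv) : mv -> Prop :=
  | gen_base (i : 'I_n) : gen_roots alpha (alpha i)
  | gen_refl (r x : mv) :
      gen_roots alpha r -> gen_roots alpha x -> gen_roots alpha (srefl r x).

Definition cartan (n : nat) (alpha : 'I_n -> mv) : 'M[R]_n :=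
  \matrix_(i, j) (2 * sip (alpha i) (alpha j) / sip (alpha i) (alpha i)).

Definition simple_roots_in_2I (n : nat) (alpha : 'I_n -> mv) (C : 'M[R]_n) : Prop :=
  cartan alpha = C /\ (forall X, gen_roots alpha X -> in2I X).

Definition cartanA2 : 'M[R]_2 := \matrix_(i, j) (if i == j then 2 else -1).
Definition cartanH2 : 'M[R]_2 := \matrix_(i, j) (if i == j then 2 else - tau).
(* D4, with node 0 the central node joined to nodes 1, 2, 3 *)
Definition cartanD4 : 'M[R]_4 :=
  \matrix_(i, j) (if i == j then 2
                  else if (i == inord 0) || (j == inord 0) then -1 else 0).

Definition roots_of (n : nat) (s : seq mv) (i : 'I_n) : mv := nth mv1 s i.

End Cl3.

(* Main.v *)
Require Import Defs.
From HB Require Import structures.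
From mathcomp Require Import all_boot all_order all_algebra ring.
Set Implicit Arguments. Unset Strict Implicit. Unset Printing Implicit Defensive.
Import Order.TTheory GRing.Theory Num.Theory.
Local Open Scope ring_scope.

Section S.
Variable R : rcfType.
Local Notation mv := (mv R).
Definition B3 := (bool * bool * bool)%type.
Definition hs (b : B3) : {set 'I_3} :=
  [set i : 'I_3 | nth false [:: b.1.1; b.1.2; b.2] i].
Definition gs (A : {set 'I_3}) : B3 :=
  (inord 0 \in A, inord 1 \in A, inord 2 \in A).

Lemma hgK A : hs (gs A) = A.
Proof.
apply/setP => i; rewrite inE /gs.
case: i => [[|[|[|?]]] Hi] //=;
  by congr (_ \in A); apply: val_inj; rewrite /= inordK.
Qed.

Lemma ghK b : gs (hs b) = b.
Proof.
case: b => [[b0 b1] b2]; rewrite /gs !inE !inordK //.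
Qed.

Lemma hs_inj : injective hs.
Proof. exact: can_inj ghK. Qed.

Lemma card_hs b : #|hs b| = (b.1.1 + b.1.2 + b.2)%N.
Proof.
rewrite cardsE -sum1_card big_mkcond /= !big_ord_recl big_ord0 /=.
by case: b => [[[] []] []].
Qed.

Lemma symd_hs b c : symd (hs b) (hs c) =
  hs (xorb b.1.1 c.1.1, xorb b.1.2 c.1.2, xorb b.2 c.2).
Proof.
apply/setP => i; rewrite !inE.
case: i => [[|[|[|?]]] Hi] //=;
by case: b c => [[[] []] []] [[[] []] []].
Qed.

Definition sg (b d : B3) : R :=
  (-1) ^+ (b.1.2 * d.1.1 + b.2 * d.1.1 + b.2 * d.1.2)%N.

Lemma sum_pair3 (F : 'I_3 * 'I_3 -> nat) :
  (\sum_p F p = \sum_(i < 3) \sum_(j < 3) F (i, j))%N.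
Proof. by rewrite pair_big; apply: eq_bigr => -[]. Qed.

Lemma bsign_hs b d : bsign R (hs b) (hs d) = sg b d.
Proof.
rewrite /bsign /sg; congr (_ ^+ _).
rewrite -sum1_card big_mkcond /=.
under eq_bigr => p _ do rewrite !inE.
rewrite sum_pair3 !big_ord_recl !big_ord0 /=.
by case: b d => [[[] []] []] [[[] []] []].
Qed.

Lemma sum_pair (I J : finType) (G : I * J -> R) :
  \sum_p G p = \sum_i \sum_j G (i, j).
Proof. by rewrite pair_big; apply: eq_bigr => -[]. Qed.

Definition sum8 (G : B3 -> R) : R :=
  G (false,false,false) + G (true,false,false) + G (false,true,false) +
  G (true,true,false) + G (false,false,true) + G (true,false,true) +
  G (false,true,true) + G (true,true,true).

Lemma sumset (F : {set 'I_3} -> R) :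
  \sum_(A : {set 'I_3}) F A = sum8 (fun b => F (hs b)).
Proof.
rewrite (reindex hs); last by exists gs => ? _; [apply: ghK | apply: hgK].
rewrite !sum_pair !big_bool /sum8 /=.
rewrite !addrA; ring.
Qed.

Definition bx (b c : B3) : B3 :=
  (xorb b.1.1 c.1.1, xorb b.1.2 c.1.2, xorb b.2 c.2).

Lemma gpc (x y : mv) c : gp x y (hs c) =
  sum8 (fun b => sg b (bx b c) * x (hs b) * y (hs (bx b c))).
Proof.
rewrite ffunE sumset /sum8 !symd_hs !bsign_hs //.
Qed.

Lemma mv_ext (x y : mv) : (forall b, x (hs b) = y (hs b)) -> x = y.
Proof. by move=> H; apply/ffunP => A; rewrite -(hgK A). Qed.

Definition code (b : B3) : nat := (b.1.1 + 2 * b.1.2 + 4 * b.2)%N.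
Definition mkl (l : seq R) : mv := [ffun A => nth 0 l (code (gs A))].

Lemma mklh l b : mkl l (hs b) = nth 0 l (code b).
Proof. by rewrite ffunE ghK. Qed.

Lemma set0h : set0 = hs (false,false,false).
Proof. by apply/setP => i; rewrite !inE; case: i => [[|[|[|?]]] Hi]. Qed.

Lemma eq_inord3 (i : 'I_3) k : (k < 3)%N -> (i == inord k) = (val i == k).
Proof. by move=> hk; rewrite -val_eqE /= inordK. Qed.

Lemma vech (x y z : R) b :
  vec x y z (hs b) = nth 0 [:: 0; x; y; 0; z; 0; 0; 0] (code b).
Proof.
rewrite ffunE.
have E : forall b', (hs b == hs b') = (b == b') by move=> b'; apply: inj_eq; apply: hs_inj.
have -> : [set (inord 0 : 'I_3)] = hs (true,false,false).
  by apply/setP => i; rewrite !inE eq_inord3 //; case: i => [[|[|[|?]]] Hi].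
have -> : [set (inord 1 : 'I_3)] = hs (false,true,false).
  by apply/setP => i; rewrite !inE eq_inord3 //; case: i => [[|[|[|?]]] Hi].
have -> : [set (inord 2 : 'I_3)] = hs (false,false,true).
  by apply/setP => i; rewrite !inE eq_inord3 //; case: i => [[|[|[|?]]] Hi].
by rewrite !E; clear E; case: b => [[[] []] []].
Qed.

Lemma mv1h b : mv1 R (hs b) = nth 0 [:: 1; 0; 0; 0; 0; 0; 0; 0] (code b).
Proof.
rewrite ffunE set0h (inj_eq hs_inj).
by case: b => [[[] []] []].
Qed.

Definition revs (b : B3) : R := (-1) ^+ 'C(b.1.1 + b.1.2 + b.2, 2).

Lemma revh (x : mv) b : Defs.rev x (hs b) = revs b * x (hs b).
Proof. by rewrite ffunE card_hs. Qed.

Lemma tau2 : tau R ^+ 2 = tau R + 1.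
Proof.
rewrite /tau.
have h5 : Num.sqrt (5 : R) ^+ 2 = 5 by rewrite sqr_sqrtr // ler0n.
by rewrite expr_div_n sqrrD h5; field.
Qed.

Ltac expand := rewrite /sum8; cbv beta.

Lemma gpA (x y z : mv) : gp (gp x y) z = gp x (gp y z).
Proof.
apply: mv_ext => -[[[] []] []]; rewrite !gpc; expand; rewrite !gpc; expand;
  rewrite /sg /=; ring.
Qed.

Lemma gp1l (x : mv) : gp (mv1 R) x = x.
Proof.
apply: mv_ext => -[[[] []] []]; rewrite !gpc; expand; rewrite !mv1h /sg /=; ring.
Qed.

Lemma gp1r (x : mv) : gp x (mv1 R) = x.
Proof.
apply: mv_ext => -[[[] []] []]; rewrite !gpc; expand; rewrite !mv1h /sg /=; ring.
Qed.

Lemma oppmv (x : mv) A : (- x) A = - x A.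
Proof. by rewrite ffunE. Qed.

Lemma gpNl (x : mv) : gp (- mv1 R) x = - x.
Proof.
apply: mv_ext => -[[[] []] []]; rewrite !gpc; expand; rewrite !oppmv !mv1h /sg /=; ring.
Qed.

Lemma revM (x y : mv) : Defs.rev (gp x y) = gp (Defs.rev y) (Defs.rev x).
Proof.
apply: mv_ext => -[[[] []] []]; rewrite !revh !gpc; expand; rewrite !revh /revs !bin2 /sg /=; ring.
Qed.

Lemma rev1 : Defs.rev (mv1 R) = mv1 R.
Proof.
apply: mv_ext => -[[[] []] []]; rewrite !revh !mv1h /revs !bin2 /=; ring.
Qed.

Lemma revvec (x y z : R) : Defs.rev (vec x y z) = vec x y z.
Proof.
apply: mv_ext => -[[[] []] []]; rewrite !revh !vech /revs !bin2 /=; ring.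
Qed.


Lemma eq_inord n (i : 'I_n.+1) k : (k <= n)%N -> (i == inord k) = (val i == k).
Proof. by move=> hk; rewrite -val_eqE /= inordK. Qed.

Lemma as0 : asimple R (inord 0) = a1 R.
Proof. by rewrite /asimple eqxx. Qed.
Lemma as1 : asimple R (inord 1) = a2 R.
Proof. by rewrite /asimple !eq_inord //= ?inordK. Qed.
Lemma as2 : asimple R (inord 2) = a3 R.
Proof. by rewrite /asimple !eq_inord //= ?inordK. Qed.

Lemma rev_as i : Defs.rev (asimple R i) = asimple R i.
Proof. by rewrite /asimple; case: ifP => _; [|case: ifP => _]; apply: revvec. Qed.

Lemma in2I_gp (X Y : mv) : in2I X -> in2I Y -> in2I (gp X Y).
Proof.
move=> hX hY; elim: hX => [|i j X' _ IH]; first by rewrite gp1l.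
by rewrite !gpA; apply: in2I_step.
Qed.

Lemma in2I_rev (X : mv) : in2I X -> in2I (Defs.rev X).
Proof.
elim => [|i j X' _ IH]; first by rewrite rev1; apply: in2I_one.
rewrite !revM !rev_as gpA; apply: in2I_gp => //.
by have := in2I_step j i (in2I_one R); rewrite gp1r.
Qed.
Lemma P1_1 : gp (a1 R) (mv1 R) = mkl [:: 0; 0; 1; 0; 0; 0; 0; 0].
Proof. apply: mv_ext => -[[[] []] []]; rewrite gpc; expand; rewrite /a1 /a2 /a3 ?vech ?mklh ?mv1h /sg /=; by field: tau2. Qed.

Lemma P1_0 : gp (a1 R) (mkl [:: 0; 0; 1; 0; 0; 0; 0; 0]) = mkl [:: 1; 0; 0; 0; 0; 0; 0; 0].
Proof. apply: mv_ext => -[[[] []] []]; rewrite gpc; expand; rewrite /a1 /a2 /a3 ?vech ?mklh ?mv1h /sg /=; by field: tau2. Qed.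

Lemma P1_E : gp (a1 R) (gp (a1 R) (mv1 R)) = mkl [:: 1; 0; 0; 0; 0; 0; 0; 0].
Proof. by rewrite P1_1 P1_0. Qed.

Lemma P2_1 : gp (a2 R) (mv1 R) = mkl [:: 0; ((- (1 / 2)) * tau R); (- (1 / 2)); 0; ((1 / 2) + (- (1 / 2)) * tau R); 0; 0; 0].
Proof. apply: mv_ext => -[[[] []] []]; rewrite gpc; expand; rewrite /a1 /a2 /a3 ?vech ?mklh ?mv1h /sg /=; by field: tau2. Qed.

Lemma P2_0 : gp (a1 R) (mkl [:: 0; ((- (1 / 2)) * tau R); (- (1 / 2)); 0; ((1 / 2) + (- (1 / 2)) * tau R); 0; 0; 0]) = mkl [:: (- (1 / 2)); 0; 0; ((1 / 2) * tau R); 0; 0; ((1 / 2) + (- (1 / 2)) * tau R); 0].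
Proof. apply: mv_ext => -[[[] []] []]; rewrite gpc; expand; rewrite /a1 /a2 /a3 ?vech ?mklh ?mv1h /sg /=; by field: tau2. Qed.

Lemma P2_E : gp (a1 R) (gp (a2 R) (mv1 R)) = mkl [:: (- (1 / 2)); 0; 0; ((1 / 2) * tau R); 0; 0; ((1 / 2) + (- (1 / 2)) * tau R); 0].
Proof. by rewrite P2_1 P2_0. Qed.

Lemma P3_1 : gp (a3 R) (mv1 R) = mkl [:: 0; 1; 0; 0; 0; 0; 0; 0].
Proof. apply: mv_ext => -[[[] []] []]; rewrite gpc; expand; rewrite /a1 /a2 /a3 ?vech ?mklh ?mv1h /sg /=; by field: tau2. Qed.

Lemma P3_0 : gp (a2 R) (mkl [:: 0; 1; 0; 0; 0; 0; 0; 0]) = mkl [:: ((- (1 / 2)) * tau R); 0; 0; (1 / 2); 0; ((- (1 / 2)) + (1 / 2) * tau R); 0; 0].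
Proof. apply: mv_ext => -[[[] []] []]; rewrite gpc; expand; rewrite /a1 /a2 /a3 ?vech ?mklh ?mv1h /sg /=; by field: tau2. Qed.

Lemma P3_E : gp (a2 R) (gp (a3 R) (mv1 R)) = mkl [:: ((- (1 / 2)) * tau R); 0; 0; (1 / 2); 0; ((- (1 / 2)) + (1 / 2) * tau R); 0; 0].
Proof. by rewrite P3_1 P3_0. Qed.

Lemma P4_7 : gp (a3 R) (mv1 R) = mkl [:: 0; 1; 0; 0; 0; 0; 0; 0].
Proof. apply: mv_ext => -[[[] []] []]; rewrite gpc; expand; rewrite /a1 /a2 /a3 ?vech ?mklh ?mv1h /sg /=; by field: tau2. Qed.

Lemma P4_6 : gp (a2 R) (mkl [:: 0; 1; 0; 0; 0; 0; 0; 0]) = mkl [:: ((- (1 / 2)) * tau R); 0; 0; (1 / 2); 0; ((- (1 / 2)) + (1 / 2) * tau R); 0; 0].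
Proof. apply: mv_ext => -[[[] []] []]; rewrite gpc; expand; rewrite /a1 /a2 /a3 ?vech ?mklh ?mv1h /sg /=; by field: tau2. Qed.

Lemma P4_5 : gp (a1 R) (mkl [:: ((- (1 / 2)) * tau R); 0; 0; (1 / 2); 0; ((- (1 / 2)) + (1 / 2) * tau R); 0; 0]) = mkl [:: 0; (- (1 / 2)); ((- (1 / 2)) * tau R); 0; 0; 0; 0; ((1 / 2) + (- (1 / 2)) * tau R)].
Proof. apply: mv_ext => -[[[] []] []]; rewrite gpc; expand; rewrite /a1 /a2 /a3 ?vech ?mklh ?mv1h /sg /=; by field: tau2. Qed.

Lemma P4_4 : gp (a3 R) (mkl [:: 0; (- (1 / 2)); ((- (1 / 2)) * tau R); 0; 0; 0; 0; ((1 / 2) + (- (1 / 2)) * tau R)]) = mkl [:: (- (1 / 2)); 0; 0; ((- (1 / 2)) * tau R); 0; 0; ((1 / 2) + (- (1 / 2)) * tau R); 0].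
Proof. apply: mv_ext => -[[[] []] []]; rewrite gpc; expand; rewrite /a1 /a2 /a3 ?vech ?mklh ?mv1h /sg /=; by field: tau2. Qed.

Lemma P4_3 : gp (a2 R) (mkl [:: (- (1 / 2)); 0; 0; ((- (1 / 2)) * tau R); 0; 0; ((1 / 2) + (- (1 / 2)) * tau R); 0]) = mkl [:: 0; 0; ((1 / 2) * tau R); 0; ((- (1 / 2)) + (1 / 2) * tau R); 0; 0; (1 / 2)].
Proof. apply: mv_ext => -[[[] []] []]; rewrite gpc; expand; rewrite /a1 /a2 /a3 ?vech ?mklh ?mv1h /sg /=; by field: tau2. Qed.

Lemma P4_2 : gp (a3 R) (mkl [:: 0; 0; ((1 / 2) * tau R); 0; ((- (1 / 2)) + (1 / 2) * tau R); 0; 0; (1 / 2)]) = mkl [:: 0; 0; 0; ((1 / 2) * tau R); 0; ((- (1 / 2)) + (1 / 2) * tau R); (1 / 2); 0].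
Proof. apply: mv_ext => -[[[] []] []]; rewrite gpc; expand; rewrite /a1 /a2 /a3 ?vech ?mklh ?mv1h /sg /=; by field: tau2. Qed.

Lemma P4_1 : gp (a2 R) (mkl [:: 0; 0; 0; ((1 / 2) * tau R); 0; ((- (1 / 2)) + (1 / 2) * tau R); (1 / 2); 0]) = mkl [:: 0; (1 / 2); (- (1 / 2)); 0; (- (1 / 2)); 0; 0; (- (1 / 2))].
Proof. apply: mv_ext => -[[[] []] []]; rewrite gpc; expand; rewrite /a1 /a2 /a3 ?vech ?mklh ?mv1h /sg /=; by field: tau2. Qed.

Lemma P4_0 : gp (a1 R) (mkl [:: 0; (1 / 2); (- (1 / 2)); 0; (- (1 / 2)); 0; 0; (- (1 / 2))]) = mkl [:: (- (1 / 2)); 0; 0; (- (1 / 2)); 0; (1 / 2); (- (1 / 2)); 0].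
Proof. apply: mv_ext => -[[[] []] []]; rewrite gpc; expand; rewrite /a1 /a2 /a3 ?vech ?mklh ?mv1h /sg /=; by field: tau2. Qed.

Lemma P4_E : gp (a1 R) (gp (a2 R) (gp (a3 R) (gp (a2 R) (gp (a3 R) (gp (a1 R) (gp (a2 R) (gp (a3 R) (mv1 R)))))))) = mkl [:: (- (1 / 2)); 0; 0; (- (1 / 2)); 0; (1 / 2); (- (1 / 2)); 0].
Proof. by rewrite P4_7 P4_6 P4_5 P4_4 P4_3 P4_2 P4_1 P4_0. Qed.

Lemma P5_7 : gp (a2 R) (mv1 R) = mkl [:: 0; ((- (1 / 2)) * tau R); (- (1 / 2)); 0; ((1 / 2) + (- (1 / 2)) * tau R); 0; 0; 0].
Proof. apply: mv_ext => -[[[] []] []]; rewrite gpc; expand; rewrite /a1 /a2 /a3 ?vech ?mklh ?mv1h /sg /=; by field: tau2. Qed.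

Lemma P5_6 : gp (a3 R) (mkl [:: 0; ((- (1 / 2)) * tau R); (- (1 / 2)); 0; ((1 / 2) + (- (1 / 2)) * tau R); 0; 0; 0]) = mkl [:: ((- (1 / 2)) * tau R); 0; 0; (- (1 / 2)); 0; ((1 / 2) + (- (1 / 2)) * tau R); 0; 0].
Proof. apply: mv_ext => -[[[] []] []]; rewrite gpc; expand; rewrite /a1 /a2 /a3 ?vech ?mklh ?mv1h /sg /=; by field: tau2. Qed.

Lemma P5_5 : gp (a1 R) (mkl [:: ((- (1 / 2)) * tau R); 0; 0; (- (1 / 2)); 0; ((1 / 2) + (- (1 / 2)) * tau R); 0; 0]) = mkl [:: 0; (1 / 2); ((- (1 / 2)) * tau R); 0; 0; 0; 0; ((- (1 / 2)) + (1 / 2) * tau R)].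
Proof. apply: mv_ext => -[[[] []] []]; rewrite gpc; expand; rewrite /a1 /a2 /a3 ?vech ?mklh ?mv1h /sg /=; by field: tau2. Qed.

Lemma P5_4 : gp (a2 R) (mkl [:: 0; (1 / 2); ((- (1 / 2)) * tau R); 0; 0; 0; 0; ((- (1 / 2)) + (1 / 2) * tau R)]) = mkl [:: 0; 0; 0; ((1 / 2) * tau R); 0; ((- (1 / 2)) + (1 / 2) * tau R); (- (1 / 2)); 0].
Proof. apply: mv_ext => -[[[] []] []]; rewrite gpc; expand; rewrite /a1 /a2 /a3 ?vech ?mklh ?mv1h /sg /=; by field: tau2. Qed.

Lemma P5_3 : gp (a3 R) (mkl [:: 0; 0; 0; ((1 / 2) * tau R); 0; ((- (1 / 2)) + (1 / 2) * tau R); (- (1 / 2)); 0]) = mkl [:: 0; 0; ((1 / 2) * tau R); 0; ((- (1 / 2)) + (1 / 2) * tau R); 0; 0; (- (1 / 2))].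
Proof. apply: mv_ext => -[[[] []] []]; rewrite gpc; expand; rewrite /a1 /a2 /a3 ?vech ?mklh ?mv1h /sg /=; by field: tau2. Qed.

Lemma P5_2 : gp (a1 R) (mkl [:: 0; 0; ((1 / 2) * tau R); 0; ((- (1 / 2)) + (1 / 2) * tau R); 0; 0; (- (1 / 2))]) = mkl [:: ((1 / 2) * tau R); 0; 0; 0; 0; (1 / 2); ((- (1 / 2)) + (1 / 2) * tau R); 0].
Proof. apply: mv_ext => -[[[] []] []]; rewrite gpc; expand; rewrite /a1 /a2 /a3 ?vech ?mklh ?mv1h /sg /=; by field: tau2. Qed.

Lemma P5_1 : gp (a2 R) (mkl [:: ((1 / 2) * tau R); 0; 0; 0; 0; (1 / 2); ((- (1 / 2)) + (1 / 2) * tau R); 0]) = mkl [:: 0; (- (1 / 2)); ((1 / 2) + (- (1 / 2)) * tau R); 0; ((- (1 / 2)) * tau R); 0; 0; 0].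
Proof. apply: mv_ext => -[[[] []] []]; rewrite gpc; expand; rewrite /a1 /a2 /a3 ?vech ?mklh ?mv1h /sg /=; by field: tau2. Qed.

Lemma P5_0 : gp (a3 R) (mkl [:: 0; (- (1 / 2)); ((1 / 2) + (- (1 / 2)) * tau R); 0; ((- (1 / 2)) * tau R); 0; 0; 0]) = mkl [:: (- (1 / 2)); 0; 0; ((1 / 2) + (- (1 / 2)) * tau R); 0; ((- (1 / 2)) * tau R); 0; 0].
Proof. apply: mv_ext => -[[[] []] []]; rewrite gpc; expand; rewrite /a1 /a2 /a3 ?vech ?mklh ?mv1h /sg /=; by field: tau2. Qed.

Lemma P5_E : gp (a3 R) (gp (a2 R) (gp (a1 R) (gp (a3 R) (gp (a2 R) (gp (a1 R) (gp (a3 R) (gp (a2 R) (mv1 R)))))))) = mkl [:: (- (1 / 2)); 0; 0; ((1 / 2) + (- (1 / 2)) * tau R); 0; ((- (1 / 2)) * tau R); 0; 0].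
Proof. by rewrite P5_7 P5_6 P5_5 P5_4 P5_3 P5_2 P5_1 P5_0. Qed.

Lemma N_3 : gp (a3 R) (mv1 R) = mkl [:: 0; 1; 0; 0; 0; 0; 0; 0].
Proof. apply: mv_ext => -[[[] []] []]; rewrite gpc; expand; rewrite /a1 /a2 /a3 ?vech ?mklh ?mv1h /sg /=; by field: tau2. Qed.

Lemma N_2 : gp (a1 R) (mkl [:: 0; 1; 0; 0; 0; 0; 0; 0]) = mkl [:: 0; 0; 0; (- 1); 0; 0; 0; 0].
Proof. apply: mv_ext => -[[[] []] []]; rewrite gpc; expand; rewrite /a1 /a2 /a3 ?vech ?mklh ?mv1h /sg /=; by field: tau2. Qed.

Lemma N_1 : gp (a3 R) (mkl [:: 0; 0; 0; (- 1); 0; 0; 0; 0]) = mkl [:: 0; 0; (- 1); 0; 0; 0; 0; 0].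
Proof. apply: mv_ext => -[[[] []] []]; rewrite gpc; expand; rewrite /a1 /a2 /a3 ?vech ?mklh ?mv1h /sg /=; by field: tau2. Qed.

Lemma N_0 : gp (a1 R) (mkl [:: 0; 0; (- 1); 0; 0; 0; 0; 0]) = mkl [:: (- 1); 0; 0; 0; 0; 0; 0; 0].
Proof. apply: mv_ext => -[[[] []] []]; rewrite gpc; expand; rewrite /a1 /a2 /a3 ?vech ?mklh ?mv1h /sg /=; by field: tau2. Qed.

Lemma N_E : gp (a1 R) (gp (a3 R) (gp (a1 R) (gp (a3 R) (mv1 R)))) = mkl [:: (- 1); 0; 0; 0; 0; 0; 0; 0].
Proof. by rewrite N_3 N_2 N_1 N_0. Qed.

Lemma S_P1_P1 : sip (mkl [:: 1; 0; 0; 0; 0; 0; 0; 0]) (mkl [:: 1; 0; 0; 0; 0; 0; 0; 0]) = 1.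
Proof. rewrite /sip set0h !gpc; expand; rewrite !revh !mklh /revs !bin2 /sg /=; by field: tau2. Qed.

Lemma S_P1_P2 : sip (mkl [:: 1; 0; 0; 0; 0; 0; 0; 0]) (mkl [:: (- (1 / 2)); 0; 0; ((1 / 2) * tau R); 0; 0; ((1 / 2) + (- (1 / 2)) * tau R); 0]) = (- (1 / 2)).
Proof. rewrite /sip set0h !gpc; expand; rewrite !revh !mklh /revs !bin2 /sg /=; by field: tau2. Qed.

Lemma S_P2_P2 : sip (mkl [:: (- (1 / 2)); 0; 0; ((1 / 2) * tau R); 0; 0; ((1 / 2) + (- (1 / 2)) * tau R); 0]) (mkl [:: (- (1 / 2)); 0; 0; ((1 / 2) * tau R); 0; 0; ((1 / 2) + (- (1 / 2)) * tau R); 0]) = 1.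
Proof. rewrite /sip set0h !gpc; expand; rewrite !revh !mklh /revs !bin2 /sg /=; by field: tau2. Qed.

Lemma S_P1_P3 : sip (mkl [:: 1; 0; 0; 0; 0; 0; 0; 0]) (mkl [:: ((- (1 / 2)) * tau R); 0; 0; (1 / 2); 0; ((- (1 / 2)) + (1 / 2) * tau R); 0; 0]) = ((- (1 / 2)) * tau R).
Proof. rewrite /sip set0h !gpc; expand; rewrite !revh !mklh /revs !bin2 /sg /=; by field: tau2. Qed.

Lemma S_P3_P3 : sip (mkl [:: ((- (1 / 2)) * tau R); 0; 0; (1 / 2); 0; ((- (1 / 2)) + (1 / 2) * tau R); 0; 0]) (mkl [:: ((- (1 / 2)) * tau R); 0; 0; (1 / 2); 0; ((- (1 / 2)) + (1 / 2) * tau R); 0; 0]) = 1.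
Proof. rewrite /sip set0h !gpc; expand; rewrite !revh !mklh /revs !bin2 /sg /=; by field: tau2. Qed.

Lemma S_P1_P4 : sip (mkl [:: 1; 0; 0; 0; 0; 0; 0; 0]) (mkl [:: (- (1 / 2)); 0; 0; (- (1 / 2)); 0; (1 / 2); (- (1 / 2)); 0]) = (- (1 / 2)).
Proof. rewrite /sip set0h !gpc; expand; rewrite !revh !mklh /revs !bin2 /sg /=; by field: tau2. Qed.

Lemma S_P1_P5 : sip (mkl [:: 1; 0; 0; 0; 0; 0; 0; 0]) (mkl [:: (- (1 / 2)); 0; 0; ((1 / 2) + (- (1 / 2)) * tau R); 0; ((- (1 / 2)) * tau R); 0; 0]) = (- (1 / 2)).
Proof. rewrite /sip set0h !gpc; expand; rewrite !revh !mklh /revs !bin2 /sg /=; by field: tau2. Qed.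

Lemma S_P2_P4 : sip (mkl [:: (- (1 / 2)); 0; 0; ((1 / 2) * tau R); 0; 0; ((1 / 2) + (- (1 / 2)) * tau R); 0]) (mkl [:: (- (1 / 2)); 0; 0; (- (1 / 2)); 0; (1 / 2); (- (1 / 2)); 0]) = 0.
Proof. rewrite /sip set0h !gpc; expand; rewrite !revh !mklh /revs !bin2 /sg /=; by field: tau2. Qed.

Lemma S_P2_P5 : sip (mkl [:: (- (1 / 2)); 0; 0; ((1 / 2) * tau R); 0; 0; ((1 / 2) + (- (1 / 2)) * tau R); 0]) (mkl [:: (- (1 / 2)); 0; 0; ((1 / 2) + (- (1 / 2)) * tau R); 0; ((- (1 / 2)) * tau R); 0; 0]) = 0.
Proof. rewrite /sip set0h !gpc; expand; rewrite !revh !mklh /revs !bin2 /sg /=; by field: tau2. Qed.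

Lemma S_P4_P5 : sip (mkl [:: (- (1 / 2)); 0; 0; (- (1 / 2)); 0; (1 / 2); (- (1 / 2)); 0]) (mkl [:: (- (1 / 2)); 0; 0; ((1 / 2) + (- (1 / 2)) * tau R); 0; ((- (1 / 2)) * tau R); 0; 0]) = 0.
Proof. rewrite /sip set0h !gpc; expand; rewrite !revh !mklh /revs !bin2 /sg /=; by field: tau2. Qed.

Lemma S_P4_P4 : sip (mkl [:: (- (1 / 2)); 0; 0; (- (1 / 2)); 0; (1 / 2); (- (1 / 2)); 0]) (mkl [:: (- (1 / 2)); 0; 0; (- (1 / 2)); 0; (1 / 2); (- (1 / 2)); 0]) = 1.
Proof. rewrite /sip set0h !gpc; expand; rewrite !revh !mklh /revs !bin2 /sg /=; by field: tau2. Qed.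

Lemma S_P5_P5 : sip (mkl [:: (- (1 / 2)); 0; 0; ((1 / 2) + (- (1 / 2)) * tau R); 0; ((- (1 / 2)) * tau R); 0; 0]) (mkl [:: (- (1 / 2)); 0; 0; ((1 / 2) + (- (1 / 2)) * tau R); 0; ((- (1 / 2)) * tau R); 0; 0]) = 1.
Proof. rewrite /sip set0h !gpc; expand; rewrite !revh !mklh /revs !bin2 /sg /=; by field: tau2. Qed.

Lemma S_P2_P1 : sip (mkl [:: (- (1 / 2)); 0; 0; ((1 / 2) * tau R); 0; 0; ((1 / 2) + (- (1 / 2)) * tau R); 0]) (mkl [:: 1; 0; 0; 0; 0; 0; 0; 0]) = (- (1 / 2)).
Proof. rewrite /sip set0h !gpc; expand; rewrite !revh !mklh /revs !bin2 /sg /=; by field: tau2. Qed.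

Lemma S_P3_P1 : sip (mkl [:: ((- (1 / 2)) * tau R); 0; 0; (1 / 2); 0; ((- (1 / 2)) + (1 / 2) * tau R); 0; 0]) (mkl [:: 1; 0; 0; 0; 0; 0; 0; 0]) = ((- (1 / 2)) * tau R).
Proof. rewrite /sip set0h !gpc; expand; rewrite !revh !mklh /revs !bin2 /sg /=; by field: tau2. Qed.

Lemma S_P4_P1 : sip (mkl [:: (- (1 / 2)); 0; 0; (- (1 / 2)); 0; (1 / 2); (- (1 / 2)); 0]) (mkl [:: 1; 0; 0; 0; 0; 0; 0; 0]) = (- (1 / 2)).
Proof. rewrite /sip set0h !gpc; expand; rewrite !revh !mklh /revs !bin2 /sg /=; by field: tau2. Qed.

Lemma S_P5_P1 : sip (mkl [:: (- (1 / 2)); 0; 0; ((1 / 2) + (- (1 / 2)) * tau R); 0; ((- (1 / 2)) * tau R); 0; 0]) (mkl [:: 1; 0; 0; 0; 0; 0; 0; 0]) = (- (1 / 2)).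
Proof. rewrite /sip set0h !gpc; expand; rewrite !revh !mklh /revs !bin2 /sg /=; by field: tau2. Qed.

Lemma S_P4_P2 : sip (mkl [:: (- (1 / 2)); 0; 0; (- (1 / 2)); 0; (1 / 2); (- (1 / 2)); 0]) (mkl [:: (- (1 / 2)); 0; 0; ((1 / 2) * tau R); 0; 0; ((1 / 2) + (- (1 / 2)) * tau R); 0]) = 0.
Proof. rewrite /sip set0h !gpc; expand; rewrite !revh !mklh /revs !bin2 /sg /=; by field: tau2. Qed.

Lemma S_P5_P2 : sip (mkl [:: (- (1 / 2)); 0; 0; ((1 / 2) + (- (1 / 2)) * tau R); 0; ((- (1 / 2)) * tau R); 0; 0]) (mkl [:: (- (1 / 2)); 0; 0; ((1 / 2) * tau R); 0; 0; ((1 / 2) + (- (1 / 2)) * tau R); 0]) = 0.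
Proof. rewrite /sip set0h !gpc; expand; rewrite !revh !mklh /revs !bin2 /sg /=; by field: tau2. Qed.

Lemma S_P5_P4 : sip (mkl [:: (- (1 / 2)); 0; 0; ((1 / 2) + (- (1 / 2)) * tau R); 0; ((- (1 / 2)) * tau R); 0; 0]) (mkl [:: (- (1 / 2)); 0; 0; (- (1 / 2)); 0; (1 / 2); (- (1 / 2)); 0]) = 0.
Proof. rewrite /sip set0h !gpc; expand; rewrite !revh !mklh /revs !bin2 /sg /=; by field: tau2. Qed.

End S.

Section T.
Variable R : rcfType.

Lemma negmv1 : in2I (- mv1 R).
Proof.
have -> : - mv1 R = gp (a1 R) (gp (a3 R) (gp (a1 R) (gp (a3 R) (mv1 R)))).
  rewrite N_E; apply: mv_ext => b. rewrite oppmv mklh mv1h. by case: b => [[[] []] []]; rewrite /= ?oppr0.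
rewrite -as0 -as2; do 2 apply: in2I_step. exact: in2I_one.
Qed.

Lemma in2I_srefl (r x : mv R) : in2I r -> in2I x -> in2I (srefl r x).
Proof.
move=> hr hx; rewrite /srefl -gpNl; apply: in2I_gp; first exact: negmv1.
by apply: in2I_gp => //; apply: in2I_gp => //; apply: in2I_rev.
Qed.

Lemma gen_in2I n (alpha : 'I_n -> mv R) :
  (forall i, in2I (alpha i)) -> forall X, gen_roots alpha X -> in2I X.
Proof.
move=> H X; elim => [i|r x _ hr _ hx]; first exact: H.
exact: in2I_srefl.
Qed.
End T.

Ltac in2Ic := rewrite /roots_of /= -?as0 -?as1 -?as2; do ! apply: in2I_step; exact: in2I_one.

Unset Implicit Arguments.

Theorem mainTheorem2 (R : rcfType) :
  simple_roots_in_2I (@roots_of R 2 [:: prodl [:: a1 R; a1 R]; prodl [:: a1 R; a2 R]])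
    (cartanA2 R)
  /\ simple_roots_in_2I (@roots_of R 2 [:: prodl [:: a1 R; a1 R]; prodl [:: a2 R; a3 R]])
    (cartanH2 R)
  /\ simple_roots_in_2I
    (@roots_of R 4
      [:: prodl [:: a1 R; a1 R];
          prodl [:: a1 R; a2 R];
          prodl [:: a1 R; a2 R; a3 R; a2 R; a3 R; a1 R; a2 R; a3 R];
          prodl [:: a3 R; a2 R; a1 R; a3 R; a2 R; a1 R; a3 R; a2 R]])
    (cartanD4 R).
Proof.
split; [|split]; split.
{ apply/matrixP => i j; rewrite !mxE /roots_of.
  case: i => [[|[|?]] Hi] //; case: j => [[|[|?]] Hj] //=.
  all: rewrite ?P4_E ?P5_E ?P1_E ?P2_E ?P3_E.
  all: rewrite ?S_P1_P1 ?S_P1_P2 ?S_P2_P2 ?S_P2_P1 ?S_P1_P3 ?S_P3_P3 ?S_P3_P1.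
  all: by field.
}
{ apply: gen_in2I => -[[|[|?]] Hi] //=; in2Ic.
}
{ apply/matrixP => i j; rewrite !mxE /roots_of.
  case: i => [[|[|?]] Hi] //; case: j => [[|[|?]] Hj] //=.
  all: rewrite ?P4_E ?P5_E ?P1_E ?P2_E ?P3_E.
  all: rewrite ?S_P1_P1 ?S_P1_P2 ?S_P2_P2 ?S_P2_P1 ?S_P1_P3 ?S_P3_P3 ?S_P3_P1.
  all: by field.
}
{ apply: gen_in2I => -[[|[|?]] Hi] //=; in2Ic.
}
{ apply/matrixP => i j; rewrite !mxE /roots_of !eq_inord //.
  case: i => [[|[|[|[|?]]]] Hi] //; case: j => [[|[|[|[|?]]]] Hj] //=.
  all: rewrite ?P4_E ?P5_E ?P1_E ?P2_E ?P3_E.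
  all: rewrite ?S_P1_P1 ?S_P1_P2 ?S_P2_P2 ?S_P2_P1 ?S_P1_P4 ?S_P1_P5 ?S_P2_P4
    ?S_P2_P5 ?S_P4_P5 ?S_P4_P4 ?S_P5_P5 ?S_P4_P1 ?S_P5_P1 ?S_P4_P2 ?S_P5_P2 ?S_P5_P4.
  all: by field.
}
{ apply: gen_in2I => -[[|[|[|[|?]]]] Hi] //=; in2Ic.
}
Qed.
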